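(* Let $G$ be a graph of order $n$ with minimum degree $\delta\geq 1$, let $\mu=\mu(G)$, and let $(x_1,\ldots,x_n)$ be a nonnegative unit eigenvector of the adjacency matrix of $G$ for the eigenvalue $\mu$. If $u$ is a vertex with $x_u=\min\{x_1,\ldots,x_n\}$, then \[ \mu(G-u)\geq\mu\left(1-\frac{1}{\mu^2/\delta+n-\delta-1}\right). \]
   Context: All graphs are finite and simple; $\mu(G)$ denotes the largest eigenvalue of the adjacency matrix of $G$; $G-u$ is the graph obtained by deleting vertex $u$; the eigenvector is indexed by the vertices of $G$. *)

(* Defs.v *)
From HB Require Import structures.
From mathcomp Require Import all_boot all_order all_algebra.
From mathcomp Require Import reals.
Set Implicit Arguments. Unset Strict Implicit. Unset Printing Implicit Defensive.
Import Order.TTheory GRing.Theory Num.Theory.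
Local Open Scope ring_scope.

Definition simple_graph (m : nat) (e : rel 'I_m) : Prop :=
  symmetric e /\ irreflexive e.

Definition adjmx (R : ringType) (m : nat) (e : rel 'I_m) : 'M[R]_m :=
  \matrix_(i, j) (e i j)%:R.

Definition deg (m : nat) (e : rel 'I_m) (v : 'I_m) : nat := #|[set w | e v w]|.
Definition mindeg (m : nat) (e : rel 'I_m.+1) : nat :=
  \big[minn/m.+1]_(v : 'I_m.+1) deg e v.

Definition largest_eigenvalue (F : numFieldType) (m : nat) (A : 'M[F]_m) (mu : F) : Prop :=
  eigenvalue A mu /\ (forall a, eigenvalue A a -> a <= mu).

Definition del_vertex_adj (R : ringType) (m : nat) (A : 'M[R]_m.+1) (u : 'I_m.+1) : 'M[R]_m :=
  row' u (col' u A).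

(* Main.v *)
Require Import Defs.
From HB Require Import structures.
From mathcomp Require Import all_boot all_order all_algebra.
From mathcomp Require Import reals classical_sets.
From mathcomp Require Import ring lra.
Import Order.TTheory GRing.Theory Num.Theory.
Local Open Scope ring_scope.
Set Implicit Arguments. Unset Strict Implicit. Unset Printing Implicit Defensive.

Section Ray.
Variable R : realType.

Definition bf {k} (M : 'M[R]_k) (v w : 'cV[R]_k) : R := (v^T *m M *m w) ord0 ord0.

Lemma bfE {k} (M : 'M[R]_k) v w :
  bf M v w = \sum_j \sum_i v i ord0 * M i j * w j ord0.
Proof.
rewrite /bf mxE; apply: eq_bigr => j _; rewrite mxE mulr_suml.
by apply: eq_bigr => i _; rewrite !mxE.
Qed.

Lemma bf1E {k} (w : 'cV[R]_k) : bf (1%:M) w w = \sum_i w i ord0 ^+ 2.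
Proof.
rewrite /bf mulmx1 mxE; apply: eq_bigr => i _; by rewrite mxE expr2.
Qed.

Lemma bf_sym {k} (M : 'M[R]_k) v w : M^T = M -> bf M v w = bf M w v.
Proof.
move=> sM; rewrite /bf.
have tr1 (A : 'M[R]_1) : A ord0 ord0 = A^T ord0 ord0 by rewrite mxE.
by rewrite tr1 !trmx_mul !trmxK sM mulmxA.
Qed.

Lemma bf_expand {k} (M : 'M[R]_k) v w t :
  bf M (v + t *: w) (v + t *: w) =
  bf M v v + t * (bf M v w + bf M w v) + t ^+ 2 * bf M w w.
Proof.
have aE (A B : 'M[R]_1) : (A+B) ord0 ord0 = A ord0 ord0 + B ord0 ord0 by rewrite mxE.
have sE (A : 'M[R]_1) c : (c *: A) ord0 ord0 = c * A ord0 ord0 by rewrite mxE.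
rewrite /bf [(v + _)^T]linearD /= [(t *: w)^T]linearZ /= !mulmxDl !mulmxDr -?scalemxAl -?scalemxAr -?scalemxAl -?scalemxAr.
rewrite !aE !sE; ring.
Qed.


Lemma discr (a b c : R) : 0 <= c ->
  (forall t, 0 <= a + t * (b + b) + t ^+ 2 * c) -> b ^+ 2 <= a * c.
Proof.
move=> c0 H; have [cz|cp] := eqVneq c 0.
  rewrite cz mulr0; have [bz|bn] := eqVneq b 0; first by rewrite bz expr2 mulr0.
  have bb : b + b != 0 by rewrite -mulr2n mulrn_eq0 negb_or bn.
  have := H (- (a + 1) / (b + b)); rewrite cz mulr0 addr0.
  have -> : a + - (a + 1) / (b + b) * (b + b) = -1 by field.
  by rewrite oppr_ge0 ler10.
have cpos : 0 < c by rewrite lt_def cp c0.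
have e : a * c - b ^+ 2 = c * (a + (- b / c) * (b + b) + (- b / c) ^+ 2 * c).
  by field.
rewrite -subr_ge0 e; apply: mulr_ge0 => //; exact: H.
Qed.

Lemma cs {k} (M : 'M[R]_k) v w : M^T = M -> (forall z, 0 <= bf M z z) ->
  bf M v w ^+ 2 <= bf M v v * bf M w w.
Proof.
move=> sM psd; apply: discr => // t.
by rewrite {2}(bf_sym v w sM) -bf_expand.
Qed.

Lemma sq_le_sum {k} (w : 'cV[R]_k) i : w i ord0 ^+ 2 <= \sum_j w j ord0 ^+ 2.
Proof.
rewrite (bigD1 i) //= lerDl; apply: sumr_ge0 => j _; exact: sqr_ge0.
Qed.

Lemma bf_bound {k} (N : 'M[R]_k) : exists C : R, 0 <= C /\ (forall w, `|bf N w w| <= C * bf (1%:M) w w).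
Proof.
exists (\sum_j \sum_i `|N i j|); split.
  by apply: sumr_ge0 => j _; apply: sumr_ge0 => i _.
move=> w; rewrite bfE bf1E mulr_suml.
apply: le_trans (ler_norm_sum _ _ _) _; apply: ler_sum => j _.
rewrite mulr_suml; apply: le_trans (ler_norm_sum _ _ _) _; apply: ler_sum => i _.
set s := \sum_i0 _.
have hi := sq_le_sum w i; have hj := sq_le_sum w j.
have h2 : 2 * (`|w i ord0| * `|w j ord0|) <= w i ord0 ^+ 2 + w j ord0 ^+ 2.
  rewrite -(real_normK (num_real (w i ord0))) -(real_normK (num_real (w j ord0))).
  rewrite -subr_ge0; have -> : `|w i ord0| ^+ 2 + `|w j ord0| ^+ 2 - 2 * (`|w i ord0| * `|w j ord0|)
     = (`|w i ord0| - `|w j ord0|) ^+ 2 by ring.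
  exact: sqr_ge0.
rewrite normrM normrM [`|_| * `|N i j|]mulrC -mulrA.
apply: ler_wpM2l => //.
rewrite /s; lra.
Qed.

Lemma rayleigh {k} (B : 'M[R]_k) (y : 'cV[R]_k) : B^T = B ->
  0 < bf (1%:M) y y ->
  exists lam, eigenvalue B lam /\ bf B y y <= lam * bf (1%:M) y y.
Proof.
move=> sB yp.
have [C [C0 HC]] := bf_bound B.
pose E : set R := fun r => exists w, 0 < bf (1%:M) w w /\ r = bf B w w / bf (1%:M) w w.
have hE : has_sup E.
  split; first by exists (bf B y y / bf (1%:M) y y); exists y.
  exists C => r [w [wp ->]]; rewrite ler_pdivrMr //.
  exact: le_trans (ler_norm _) (HC w).
set lam := sup E.
have ub : forall w, bf B w w <= lam * bf (1%:M) w w.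
  move=> w; have s0 : 0 <= bf (1%:M) w w.
    by rewrite bf1E; apply: sumr_ge0 => i _; exact: sqr_ge0.
  have [sz|sp] := eqVneq (bf (1%:M) w w) 0.
    have w0 : forall i, w i ord0 = 0.
      move=> i; move: sz; rewrite bf1E => /eqP; rewrite psumr_eq0; last first.
        by move=> j _; exact: sqr_ge0.
      by move=> /allP /(_ i (mem_index_enum _)) /=; rewrite sqrf_eq0 => /eqP.
    rewrite sz mulr0 bfE big1 // => j _; rewrite big1 // => i _.
    by rewrite w0 !mul0r.
  have spos : 0 < bf (1%:M) w w by rewrite lt_def sp s0.
  rewrite -ler_pdivrMr //; apply: (sup_upper_bound hE); exists w; split => //.
pose M := lam%:M - B.
have bfM w : bf M w w = lam * bf (1%:M) w w - bf B w w.
  have dE (P Q : 'M[R]_1) : (P - Q) ord0 ord0 = P ord0 ord0 - Q ord0 ord0 by rewrite !mxE.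
  rewrite /bf /M mulmxBr mulmxBl dE; congr (_ - _).
  by rewrite mul_mx_scalar mulmx1 -scalemxAl mxE.
have psd : forall w, 0 <= bf M w w by move=> w; rewrite bfM subr_ge0.
have sM : M^T = M by rewrite /M linearB /= tr_scalar_mx sB.
have [/det0P [v vn vM]|dn] := boolP (\det M == 0).
  exists lam; split; last exact: ub.
  apply/eigenvalueP; exists v => //; move: vM; rewrite /M mulmxBr mul_mx_scalar.
  by move=> /eqP; rewrite subr_eq0 => /eqP <-.
exfalso; have Mu : M \in unitmx by rewrite unitmxE unitfE.
set N := invmx M.
have [D [D0 HD]] := bf_bound N^T.
have key : forall w, bf (1%:M) w w ^+ 2 <= D * bf (1%:M) w w * bf M w w.
  move=> w; pose v := N^T *m w.
  have e1 : bf M v w = bf (1%:M) w w.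
    by rewrite /bf /v trmx_mul trmxK -(mulmxA w^T N M) mulVmx.
  have e2 : bf M v v = bf N^T w w.
    rewrite /bf /v trmx_mul trmxK !mulmxA -(mulmxA w^T N M) mulVmx // mulmx1.
    by rewrite -mulmxA.
  have := cs v w sM psd; rewrite e1 e2 => h; apply: le_trans h _.
  apply: ler_wpM2r; first exact: psd.
  exact: le_trans (ler_norm _) (HD w).
have epsp : 0 < 1 / (D + 1) by rewrite divr_gt0 // ltr_wpDl.
have [r [w [wp ->]] hr] := sup_adherent epsp hE.
set s := bf (1%:M) w w in wp hr.
have h1 : lam * s - bf B w w < 1 / (D + 1) * s.
  move: hr; rewrite ltr_pdivlMr // mulrBl -/lam; lra.
have h2 : s <= D * bf M w w.
  have := key w; rewrite -/s expr2 [D * s]mulrC -mulrA.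
  by rewrite (ler_pM2l wp).
rewrite bfM -/s in h2.
have h3 : D * (lam * s - bf B w w) <= D * (1 / (D + 1) * s).
  by apply: ler_wpM2l => //; apply: ltW.
have D1 : D + 1 != 0 by rewrite gt_eqF // ltr_wpDl.
have h4 : D * (1 / (D + 1) * s) = s - s / (D + 1) by field.
have h5 : 0 < s / (D + 1) by rewrite divr_gt0 // ltr_wpDl.
have := le_trans h2 h3; rewrite h4; move: h5; clear; lra.
Qed.

End Ray.

Section Main.
Variable R : realType.
Variable n : nat.
Variable e : rel 'I_n.+1.
Hypothesis sg : simple_graph e.

Let A := adjmx R e.

Lemma A_sym : A^T = A.
Proof.
case: sg => se _; apply/matrixP => i j; rewrite !mxE /=; by rewrite se.
Qed.

Lemma A_mul (x : 'cV[R]_n.+1) z : (A *m x) z ord0 = \sum_(j | e z j) x j ord0.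
Proof.
rewrite mxE [RHS]big_mkcond /=; apply: eq_bigr => j _; rewrite mxE.
by case: (e z j); rewrite ?mul1r ?mul0r.
Qed.

Lemma deg_le v : (deg e v <= n)%N.
Proof.
case: sg => _ ir.
rewrite /deg; apply: (@leq_trans #|[set~ v]|); last by rewrite cardsC1 card_ord.
apply: subset_leq_card.
apply/fintype.subsetP => w; rewrite !inE => h.
by apply: contraTneq h => ->; rewrite ir.
Qed.

Lemma mindeg_le v : (mindeg e <= deg e v)%N.
Proof.
rewrite /mindeg.
have L (s : seq 'I_n.+1) : v \in s -> (\big[minn/n.+1]_(i <- s) deg e i <= deg e v)%N.
  elim: s => //= a s IH; rewrite inE big_cons => /orP [/eqP->|h].
    exact: geq_minl.
  by rewrite geq_min IH ?orbT.
exact: L (mem_index_enum _).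
Qed.

Lemma mindeg_ex : exists v, mindeg e = deg e v.
Proof.
rewrite /mindeg; have [eq|//] : (\big[minn/n.+1]_(v : 'I_n.+1) deg e v = n.+1 \/
    exists v, \big[minn/n.+1]_(v : 'I_n.+1) deg e v = deg e v)%N.
  apply: (big_ind (fun m => m = n.+1 \/ exists v, m = deg e v)%N).
  - by left.
  - by move=> a b ha hb /=; case: (leqP a b).
  - by move=> i _; right; exists i.
have := leq_trans (mindeg_le ord0) (deg_le ord0).
by rewrite /mindeg eq ltnn.
Qed.

Lemma sq_mono (a b : R) : 0 <= a -> a <= b -> a ^+ 2 <= b ^+ 2.
Proof. by move=> a0 ab; rewrite !expr2; apply: ler_pM. Qed.

Lemma deg_ineq (mu : R) (x : 'cV[R]_n.+1) u w :
  (forall i, 0 <= x i ord0) -> \sum_i x i ord0 ^+ 2 = 1 ->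
  A *m x = mu *: x -> (forall v, x u ord0 <= x v ord0) ->
  deg e w = mindeg e -> (1 <= mindeg e)%N ->
  x u ord0 ^+ 2 * (mu ^+ 2 / (mindeg e)%:R + (n.+1)%:R - (mindeg e)%:R) <= 1.
Proof.
move=> x0 x1 Heig xmin dw d1.
set m := x u ord0; set d := mindeg e in dw d1 *.
have dpos : 0 < (d%:R : R) by rewrite ltr0n.
have sN : \sum_(v | e w v) x v ord0 = mu * x w ord0.
  by rewrite -A_mul Heig mxE.
have cst (c : R) : \sum_(v | e w v) c = c * d%:R.
  rewrite mulr_natr -dw /deg -sumr_const; apply: eq_bigl => v; by rewrite inE.
have cardC : (#|[set v | ~~ e w v]| + d)%N = n.+1.
  have -> : [set v | ~~ e w v] = ~: [set v | e w v].
    by apply/setP => v; rewrite !inE.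
  by rewrite -dw /deg addnC cardsC card_ord.
have dle : (d <= n.+1)%N by rewrite -cardC leq_addl.
have cC : #|[set v | ~~ e w v]| = (n.+1 - d)%N.
  by apply/eqP; rewrite -(eqn_add2r d) cardC subnK.
have cstC (c : R) : \sum_(v | ~~ e w v) c = c * (n.+1 - d)%:R.
  rewrite mulr_natr -cC -sumr_const; apply: eq_bigl => v; by rewrite inE.
set t := mu * x w ord0 / d%:R.
have h1 : 0 <= \sum_(v | e w v) (x v ord0 - t) ^+ 2.
  by apply: sumr_ge0 => v _; exact: sqr_ge0.
have e1 : \sum_(v | e w v) (x v ord0 - t) ^+ 2 =
    \sum_(v | e w v) x v ord0 ^+ 2 - 2 * t * \sum_(v | e w v) x v ord0 + t ^+ 2 * d%:R.
  rewrite -cst mulr_sumr -sumrB -big_split /=; apply: eq_bigr => v _; ring.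
rewrite e1 sN in h1.
have h2 : m ^+ 2 * (n.+1 - d)%:R <= \sum_(v | ~~ e w v) x v ord0 ^+ 2.
  rewrite -cstC; apply: ler_sum => v _; apply: sq_mono; [exact: x0 | exact: xmin].
have h3 : m ^+ 2 <= x w ord0 ^+ 2 by apply: sq_mono; [exact: x0 | exact: xmin].
have sp : \sum_i x i ord0 ^+ 2 = \sum_(v | e w v) x v ord0 ^+ 2 + \sum_(v | ~~ e w v) x v ord0 ^+ 2.
  exact: bigID.
rewrite natrB // in h2; rewrite sp in x1.
have e2 : 2 * t * (mu * x w ord0) - t ^+ 2 * d%:R = mu ^+ 2 * x w ord0 ^+ 2 / d%:R.
  rewrite /t; field; by rewrite gt_eqF.
have h4 : m ^+ 2 * (mu ^+ 2 / d%:R) <= mu ^+ 2 * x w ord0 ^+ 2 / d%:R.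
  rewrite mulrA [m ^+ 2 * _]mulrC ler_pM2r ?invr_gt0 //.
  by apply: ler_wpM2l => //; exact: sqr_ge0.
move: h1 h2 h4; rewrite -e2.
set S1 := \sum_(v | e w v) _; set S2 := \sum_(v | ~~ e w v) _.
move=> h1 h2 h4; move: x1; rewrite -/S1 -/S2 => x1.
clear -h1 h2 h4 x1; lra.
Qed.

Lemma ray_setup (mu : R) (x : 'cV[R]_n.+1) u :
  \sum_i x i ord0 ^+ 2 = 1 -> A *m x = mu *: x ->
  let y : 'cV[R]_n := \col_i x (lift u i) ord0 in
  bf (1%:M) y y = 1 - x u ord0 ^+ 2 /\
  bf (del_vertex_adj A u) y y = mu - 2 * mu * x u ord0 ^+ 2.
Proof.
move=> x1 Heig y; split.
  rewrite bf1E -x1 (bigD1_ord u) //= addrC addrK.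
  by apply: eq_bigr => i _; rewrite mxE.
have Ae i j : A i j = (e i j)%:R by rewrite mxE.
have Asym i j : A i j = A j i by rewrite !Ae; case: sg => se _; rewrite se.
have Auu : A u u = 0 by rewrite Ae; case: sg => _ ir; rewrite ir.
have Au : \sum_j A u j * x j ord0 = mu * x u ord0.
  have := congr1 (fun M : 'cV[R]_n.+1 => M u ord0) Heig; by rewrite /= !mxE.
have bfA : bf A x x = mu.
  rewrite /bf -mulmxA Heig -scalemxAr mxE -[RHS]mulr1 -x1; congr (_ * _).
  by rewrite mxE; apply: eq_bigr => i _; rewrite mxE expr2.
have Au' : \sum_(j < n) A u (lift u j) * x (lift u j) ord0 = mu * x u ord0.
  by rewrite -Au [RHS](bigD1_ord u) //= Auu mul0r add0r.
move: bfA; rewrite bfE (bigD1_ord u) //=.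
have -> : \sum_(i < n) \sum_(i0 < n.+1) x i0 ord0 * A i0 (lift u i) * x (lift u i) ord0 =
   \sum_(i < n) (x u ord0 * A u (lift u i) * x (lift u i) ord0 +
     \sum_(i0 < n) x (lift u i0) ord0 * A (lift u i0) (lift u i) * x (lift u i) ord0).
  by apply: eq_bigr => i _; rewrite (bigD1_ord u).
rewrite big_split /=.
have -> : \sum_i x i ord0 * A i u * x u ord0 = mu * x u ord0 * x u ord0.
  rewrite -Au mulr_suml; apply: eq_bigr => i _; rewrite Asym; ring.
have -> : \sum_(i < n) x u ord0 * A u (lift u i) * x (lift u i) ord0 =
    x u ord0 * (mu * x u ord0).
  rewrite -Au' mulr_sumr; apply: eq_bigr => i _; ring.
have -> : \sum_(i < n) \sum_(i0 < n) x (lift u i0) ord0 * A (lift u i0) (lift u i) * x (lift u i) ord0 = bf (del_vertex_adj A u) y y.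
  rewrite bfE; apply: eq_bigr => j _; apply: eq_bigr => i _; rewrite !mxE.
  by rewrite /A.
move=> h; rewrite -{1}h; ring.
Qed.

Lemma mu_pos (mu : R) (x : 'cV[R]_n.+1) :
  (1 <= mindeg e)%N -> (forall i, 0 <= x i ord0) -> \sum_i x i ord0 ^+ 2 = 1 ->
  A *m x = mu *: x -> 0 < mu.
Proof.
move=> d1 x0 x1 Heig.
have [v xv] : exists v, 0 < x v ord0.
  case: (pickP (fun v => 0 < x v ord0)) => [v xv|none]; first by exists v.
  exfalso; move: x1; rewrite big1 => [/eqP|i _]; first by rewrite eq_sym oner_eq0.
  have := x0 i; rewrite le_eqVlt none orbF => /eqP <-; by rewrite expr2 mulr0.
have : (0 < deg e v)%N by apply: leq_trans d1 (mindeg_le v).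
rewrite /deg card_gt0 => /set0Pn [z]; rewrite inE => evz.
have ezv : e z v by case: sg => se _; rewrite se.
have hz : x v ord0 <= mu * x z ord0.
  have -> : mu * x z ord0 = (A *m x) z ord0 by rewrite Heig mxE.
  rewrite A_mul (bigD1 v) //= lerDl; apply: sumr_ge0 => j _; exact: x0.
rewrite ltNge; apply/negP => mu0.
have : mu * x z ord0 <= 0 by apply: mulr_le0_ge0 => //; exact: x0.
move: hz xv; clear; lra.
Qed.

Lemma main_sec (mu mu' : R) (x : 'cV[R]_n.+1) (u : 'I_n.+1) :
  (1 <= mindeg e)%N ->
  (forall i, 0 <= x i ord0) ->
  \sum_i (x i ord0) ^+ 2 = 1 ->
  A *m x = mu *: x ->
  (forall v, x u ord0 <= x v ord0) ->
  largest_eigenvalue (del_vertex_adj A u) mu' ->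
  mu * (1 - 1 / (mu ^+ 2 / (mindeg e)%:R + (n.+1)%:R - (mindeg e)%:R - 1)) <= mu'.
Proof.
move=> d1 x0 x1 Heig xmin [_ lmax].
have [w dw] := mindeg_ex.
have hd := deg_ineq x0 x1 Heig xmin (esym dw) d1.
have mup := mu_pos d1 x0 x1 Heig.
have dn : (mindeg e <= n)%N by rewrite dw deg_le.
have [h1 h2] := ray_setup u x1 Heig.
set y := \col_i x (lift u i) ord0 in h1 h2.
have Bsym : (del_vertex_adj A u)^T = del_vertex_adj A u.
  by apply/matrixP => i j; rewrite !mxE; case: sg => se _; rewrite se.
set d := (mindeg e)%:R in hd *.
set m2 := x u ord0 ^+ 2 in hd h1 h2 *.
have dpos : 0 < d by rewrite ltr0n.
have dle : d <= n%:R by rewrite ler_nat.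
have N1 : (n.+1)%:R = n%:R + 1 :> R by rewrite -addn1 natrD.
rewrite N1 in hd *.
have mq : 0 < mu ^+ 2 / d by rewrite divr_gt0 // exprn_gt0.
set Q := mu ^+ 2 / d + (n%:R + 1) - d - 1.
have Qp : 0 < Q by rewrite /Q; move: mq dle; clear; lra.
have hd' : m2 * (Q + 1) <= 1 by rewrite /Q; move: hd; clear; lra.
have m20 : 0 <= m2 by exact: sqr_ge0.
have m21 : m2 < 1.
  rewrite ltNge; apply/negP => h.
  have : 1 * (Q + 1) <= m2 * (Q + 1) by rewrite ler_pM2r //; move: Qp; clear; lra.
  move: hd' Qp; clear; lra.
have yp : 0 < bf (1%:M) y y by rewrite h1 subr_gt0.
have [lam [ev hl]] := rayleigh Bsym yp.
have lm := lmax _ ev.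
rewrite h1 h2 in hl.
have k1 : mu * (1 - 2 * m2) <= mu' * (1 - m2).
  apply: le_trans (_ : lam * (1 - m2) <= _).
    by move: hl; clear; lra.
  by rewrite ler_pM2r // subr_gt0.
have e3 : mu * (1 - 1 / Q) = mu * (Q - 1) / Q by field; rewrite gt_eqF.
rewrite e3 ler_pdivrMr //.
have p1 : 0 < 1 - m2 by rewrite subr_gt0.
rewrite -(ler_pM2r p1).
have k2 : mu * (1 - 2 * m2) * Q <= mu' * (1 - m2) * Q by rewrite ler_pM2r.
have k3 : mu * (Q - 1) * (1 - m2) - mu * (1 - 2 * m2) * Q = mu * (m2 * (Q + 1) - 1).
  by ring.
have k4 : mu * (m2 * (Q + 1) - 1) <= 0.
  by apply: mulr_ge0_le0; [exact: ltW | move: hd'; clear; lra].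
have k5 : mu' * Q * (1 - m2) = mu' * (1 - m2) * Q by ring.
rewrite k5; move: k2 k3 k4; clear; lra.
Qed.

End Main.

Theorem lemma3 (R : realType) (n : nat) (e : rel 'I_n.+1)
  (mu mu' : R) (x : 'cV[R]_n.+1) (u : 'I_n.+1) :
  simple_graph e ->
  (1 <= mindeg e)%N ->
  largest_eigenvalue (adjmx R e) mu ->
  (forall i, 0 <= x i ord0) ->
  \sum_i (x i ord0) ^+ 2 = 1 ->
  adjmx R e *m x = mu *: x ->
  (forall v, x u ord0 <= x v ord0) ->
  largest_eigenvalue (del_vertex_adj (adjmx R e) u) mu' ->
  mu * (1 - 1 / (mu ^+ 2 / (mindeg e)%:R + (n.+1)%:R - (mindeg e)%:R - 1)) <= mu'.
Proof.
move=> sg d1 _ x0 x1 Heig xmin lm.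
exact: (main_sec sg d1 x0 x1 Heig xmin lm).
Qed.
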